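(* Let $k\ge 2$ and $n=r+m(k+1)$ with integers $m\ge 0$ and $r\in\{0,1,\ldots,k\}$. Then: (i) if $r=0$, $L_n^{(k)}\equiv 2(-1)^m\pmod{2^{k-2}}$; (ii) if $r=1$, $L_n^{(k)}\equiv (4m+1)(-1)^m\pmod{2^{k-1}}$; (iii) if $r=2$, $L_n^{(k)}\equiv (4m^2+6m+3)(-1)^m\pmod{2^{k}}$; (iv) if $r\ge 3$, $$L_n^{(k)}\equiv (-1)^m2^{r-2}\left(4\left(\binom{m+r+1}{m}-\binom{m+r-1}{m-2}\right)-\left(\binom{m+r}{m}-\binom{m+r-2}{m-2}\right)\right)\pmod{2^{k+r-2}}.$$
   Context: For an integer $k\ge 2$, the $k$-Lucas sequence $\{L_n^{(k)}\}_{n\in\mathbb{Z}}$ is defined by $L_{2-k}^{(k)}=\cdots=L_{-1}^{(k)}=0$, $L_0^{(k)}=2$, $L_1^{(k)}=1$, and $L_n^{(k)}=L_{n-1}^{(k)}+\cdots+L_{n-k}^{(k)}$. Convention: $\binom{a}{b}=0$ if $a<b$ or if $a$ or $b$ is negative. *)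

(* Defs.v *)
From mathcomp Require Import all_boot all_order all_algebra.
Set Implicit Arguments. Unset Strict Implicit. Unset Printing Implicit Defensive.
Import Order.TTheory GRing.Theory Num.Theory.

(* k-Lucas sequence. [lucas_win k n] is the window
   [:: L_n; L_{n-1}; ...; L_{n-k+1}] (size k), where indices in 2-k..-1 give 0.
   L_0 = 2, L_1 = 1, and for n >= 2, L_n = L_{n-1} + ... + L_{n-k}. *)
Fixpoint lucas_win (k n : nat) : seq nat :=
  match n with
  | 0 => 2 :: nseq k.-1 0
  | n'.+1 =>
      let w := lucas_win k n' in
      (if n' is 0 then 1 else sumn w) :: take k.-1 w
  end.

Definition lucas (k n : nat) : nat := head 0 (lucas_win k n).

(* Binomial coefficient on integers with the convention C(a,b) = 0
   if a < b or a or b negative. *)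
Definition binZ (a b : int) : int :=
  if (0 <= b)%R && (b <= a)%R then Posz (binomial `|a|%N `|b|%N) else 0%R.

(* Main.v *)
Require Import Defs.
From mathcomp Require Import all_boot all_order all_algebra.
From mathcomp Require Import zify ring lra.
Import Order.TTheory GRing.Theory Num.Theory.
Local Open Scope ring_scope.

Lemma size_win k n : (0 < k)%N -> size (lucas_win k n) = k.
Proof.
move=> k0; elim: n => [|n IH] /=; first by rewrite size_nseq prednK.
rewrite size_takel ?IH ?prednK //; lia.
Qed.

Lemma nth_win k n i : (i < k)%N ->
  nth 0%N (lucas_win k n) i = if (i <= n)%N then lucas k (n - i) else 0%N.
Proof.
elim: n i => [|n IH] [|i] ik //=.
- by rewrite nth_nseq; case: ifP.
- rewrite nth_take; last lia.
  by rewrite IH ?ltnS ?subSS //; lia.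
Qed.

Lemma lucas_rec k n : (2 <= k)%N ->
  (lucas k n.+3)%:Z = 2 * (lucas k n.+2)%:Z
     - (if (k <= n.+2)%N then (lucas k (n.+2 - k))%:Z else 0).
Proof.
move=> k2.
have h1 : lucas k n.+3 = (lucas k n.+2 + sumn (take k.-1 (lucas_win k n.+1)))%N by [].
have h2 : lucas k n.+2 = sumn (lucas_win k n.+1) by [].
set w := lucas_win k n.+1 in h1 h2.
have sw : size w = k by rewrite size_win //; lia.
have e : sumn w = (sumn (take k.-1 w) + nth 0%N w k.-1)%N.
  rewrite -{1}(cat_take_drop k.-1 w) sumn_cat (drop_nth 0%N); last lia.
  rewrite drop_oversize ?sw //=; lia.
rewrite /w nth_win in e; last lia.
rewrite h1 h2 e.
case: ifP => c1; case: ifP => c2; try lia.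
- have -> : (n.+1 - k.-1 = n.+2 - k)%N by lia.
  rewrite !PoszD; ring.
- rewrite !PoszD; ring.
Qed.

Fixpoint alist (k n : nat) : seq int :=
  match n with
  | 0 => [:: 1]
  | n'.+1 => let l := alist k n' in (2 * head 0 l - nth 0 l k) :: l
  end.

Definition ai k n j := nth 0 (alist k n) j.

Lemma ai_S k n j : ai k n.+1 j.+1 = ai k n j. Proof. by []. Qed.
Lemma ai_S0 k n : ai k n.+1 0 = 2 * ai k n 0 - ai k n k.
Proof. by rewrite /ai /=; case: (alist k n). Qed.

Lemma ai_big k n j : (n < j)%N -> ai k n j = 0.
Proof.
elim: n j => [|n IH] [|j] //=; first by case: j.
by move=> h; rewrite ai_S IH.
Qed.

Lemma ai_shift k n q j : ai k (n + q) (j + q) = ai k n j.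
Proof. by elim: q => [|q IH]; rewrite ?addn0 // !addnS ai_S. Qed.

Lemma a_small k n : (n <= k)%N -> ai k n 0 = 2 ^+ n.
Proof.
elim: n => [|n IH] h //.
rewrite ai_S0 IH ?ai_big; [|lia|lia]. by rewrite exprS subr0.
Qed.

Lemma a_rec k n : ai k (n + k).+1 0 = 2 * ai k (n + k) 0 - ai k n 0.
Proof. by rewrite ai_S0; have := ai_shift k n k 0; rewrite add0n => ->. Qed.

Lemma L_a k n : (2 <= k)%N ->
  (lucas k n)%:Z = 2 * ai k n 0 - 3 * ai k n 1 + ai k n 2.
Proof.
move=> k2; elim/ltn_ind: n => n IH.
case: n IH => [|[|[|n]]] IH.
- by rewrite /ai /=.
- by case: k k2 {IH} => [|[|k]] // _; rewrite /ai /=.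
- case: k k2 {IH} => [|[|k]] // _; rewrite /ai /=.
  rewrite /lucas /= (_ : 0 :: nseq k 0 = nseq k.+1 0%N) // take_nseq // sumn_nseq nth_nil; lia.
- rewrite lucas_rec // (IH n.+2) // !ai_S !ai_S0.
  case: ifP => c.
    rewrite IH; last lia.
    set p := (n.+2 - k)%N.
    have ep : n = (p + k - 2)%N by lia.
    have e0 : ai k n.+2 k = ai k p 0.
      by rewrite -(ai_shift k p k 0) add0n (_ : (p + k = n.+2)%N) //; lia.
    have e1 : ai k n.+1 k = ai k p 1.
      by rewrite -ai_S -(ai_shift k p k 1) (_ : (p + k = n.+2)%N) ?add1n //; lia.
    have e2 : ai k n k = ai k p 2.
      by rewrite -[ai k n k]ai_S -[ai k n.+1 k.+1]ai_S -(ai_shift k p k 2) (_ : (p + k = n.+2)%N) ?add2n //; lia.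
    rewrite e0 e1 e2; ring.
  rewrite (@ai_big k n.+2 k) ?(@ai_big k n.+1 k) ?(@ai_big k n k); [ring|lia|lia|lia].
Qed.

Lemma a_cong k m r : (r <= k)%N -> exists q : int,
  ai k (r + m * (k + 1)) 0 = (-1) ^+ m * ('C(r + m, m))%:Z * 2 ^+ r + q * 2 ^+ (r + k + 1).
Proof.
elim: m r => [|m IHm] r.
  move=> rk; exists 0; rewrite mul0n !addn0 a_small // bin0 expr0; ring.
elim: r => [|r IHr] rk.
  have [q1 h1] := IHm k (leqnn k).
  have [q2 h2] := IHm 0%N (leq0n k).
  have -> : (0 + m.+1 * (k + 1) = (m * (k + 1) + k).+1)%N by lia.
  rewrite a_rec (_ : (m * (k + 1) + k = k + m * (k + 1))%N) ?h1; last lia.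
  rewrite (_ : (m * (k + 1) = 0 + m * (k + 1))%N) // h2.
  exists ((-1) ^+ m * ('C(k + m, m))%:Z + q1 * 2 ^+ (k + 1) - q2).
  rewrite !add0n !binn !expr0 exprS.
  rewrite (_ : (k + k + 1 = (k + 1) + k)%N) ?exprD; last lia.
  rewrite ?expr1.
  ring.
have [q1 h1] := IHr (ltnW rk).
have [q2 h2] := IHm r.+1 rk.
have -> : (r.+1 + m.+1 * (k + 1) = (r.+1 + m * (k + 1) + k).+1)%N by lia.
rewrite a_rec (_ : (r.+1 + m * (k + 1) + k = r + m.+1 * (k + 1))%N) ?h1 ?h2; last lia.
exists (q1 - q2).
have hb : 'C(r.+1 + m.+1, m.+1) = ('C(r + m.+1, m.+1) + 'C(r.+1 + m, m))%N.
  by rewrite -addSnnS addSn binS addSnnS.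
have he : 2 ^+ (r.+1 + k + 1) = 2 ^+ (r + k + 1) * 2 :> int.
  by rewrite -exprSr addSn.
rewrite hb (PoszD ('C(r + m.+1, m.+1))) he exprS [2 ^+ r.+1]exprS; set E := 2 ^+ (r + k + 1); ring.
Qed.

Lemma a_cong' k m r : (r <= k)%N -> exists q : int,
  ai k (r + m * (k + 1)) 0 = (-1) ^+ m * ('C(r + m, m))%:Z * 2 ^+ r + q * 2 ^+ k * 2 * 2 ^+ r.
Proof.
move=> rk; have [q h] := @a_cong k m r rk; exists q; rewrite h addn1 exprSr exprD; ring.
Qed.

Lemma modP (x y d q : int) : x = y + q * d -> (x = y %[mod d])%Z.
Proof.
move=> h; apply/eqP; rewrite eqz_mod_dvd; apply/dvdzP; exists q; rewrite h; ring.
Qed.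

Lemma pow2 e : ((2 ^ e)%N%:Z) = 2 ^+ e :> int.
Proof. by rewrite -natz natrX. Qed.

Lemma binZ_pos a b : binZ (Posz a) (Posz b) = Posz 'C(a, b).
Proof.
rewrite /binZ; case: ifP => // h.
rewrite bin_small //; move/negbT: h; rewrite negb_and; case/orP => h; lia.
Qed.

Lemma binZ_neg a b : (b < 0) -> binZ a b = 0.
Proof. rewrite /binZ => h; case: ifP => // /andP[h1 _]; lia. Qed.

Lemma natid X p : (8 * 'C(X.+3, p.+2) + 'C(X.+1, p.+2) + 4 * 'C(X.+2, p) + 'C(X.+3, p.+2)
  = 6 * 'C(X.+2, p.+2) + 4 * 'C(X.+4, p.+2) + 'C(X.+1, p))%N.
Proof. rewrite !binS; lia. Qed.

Lemma ident s m : 8 * ('C(s.+3 + m, m))%:Z - 6 * ('C(s.+2 + m, m))%:Z + ('C(s.+1 + m, m))%:Z =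
  4 * (binZ (m%:Z + (s.+3)%:Z + 1) m%:Z - binZ (m%:Z + (s.+3)%:Z - 1) (m%:Z - 2))
  - (binZ (m%:Z + (s.+3)%:Z) m%:Z - binZ (m%:Z + (s.+3)%:Z - 2) (m%:Z - 2)).
Proof.
rewrite (_ : m%:Z + (s.+3)%:Z + 1 = Posz (m + s + 4)); last lia.
rewrite (_ : m%:Z + (s.+3)%:Z - 1 = Posz (m + s + 2)); last lia.
rewrite (_ : m%:Z + (s.+3)%:Z - 2 = Posz (m + s + 1)); last lia.
rewrite (_ : m%:Z + (s.+3)%:Z = Posz (m + s + 3)); last lia.
rewrite !binZ_pos.
case: m => [|[|p]].
- rewrite !binZ_neg // !bin0; lia.
- rewrite !binZ_neg // !bin1; lia.
rewrite (_ : (p.+2)%:Z - 2 = Posz p); last lia.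
rewrite !binZ_pos.
have := natid (p + s + 2) p.
rewrite (_ : (s.+3 + p.+2 = (p + s + 2).+3)%N); last lia.
rewrite (_ : (s.+2 + p.+2 = (p + s + 2).+2)%N); last lia.
rewrite (_ : (s.+1 + p.+2 = (p + s + 2).+1)%N); last lia.
rewrite (_ : (p.+2 + s + 4 = (p + s + 2).+4)%N); last lia.
rewrite (_ : (p.+2 + s + 2 = (p + s + 2).+2)%N); last lia.
rewrite (_ : (p.+2 + s + 1 = (p + s + 2).+1)%N); last lia.
rewrite (_ : (p.+2 + s + 3 = (p + s + 2).+3)%N); last lia.
move/(congr1 Posz); rewrite ?PoszD ?PoszM => h; lia.
Qed.

Lemma bin2m m : ('C(2 + m, m) * 2 = (m + 2) * (m + 1))%N.
Proof.
elim: m => [|m IH] //.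
rewrite (_ : (2 + m.+1 = (m.+2).+1)%N) // binS binSn.
move: IH; rewrite (_ : (2 + m = m.+2)%N) //; nia.
Qed.

Theorem lemma3p1 (k m r : nat) :
  (2 <= k)%N -> (r <= k)%N ->
  let n := (r + m * (k + 1))%N in
  [/\ (r = 0%N ->
        ((lucas k n)%:Z = 2 * (-1) ^+ m %[mod (2 ^ (k - 2))%N%:Z])%Z),
      (r = 1%N ->
        ((lucas k n)%:Z = (4 * m%:Z + 1) * (-1) ^+ m %[mod (2 ^ (k - 1))%N%:Z])%Z),
      (r = 2%N ->
        ((lucas k n)%:Z = (4 * m%:Z ^+ 2 + 6 * m%:Z + 3) * (-1) ^+ m
           %[mod (2 ^ k)%N%:Z])%Z) &
      ((3 <= r)%N ->
        ((lucas k n)%:Z =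
           (-1) ^+ m * (2 ^ (r - 2))%N%:Z *
           (4 * (binZ (m%:Z + r%:Z + 1) m%:Z - binZ (m%:Z + r%:Z - 1) (m%:Z - 2))
            - (binZ (m%:Z + r%:Z) m%:Z - binZ (m%:Z + r%:Z - 2) (m%:Z - 2)))
           %[mod (2 ^ (k + r - 2))%N%:Z])%Z)].
Proof.
move=> k2 rk n.
rewrite /n; clear n.
have HL := @L_a k (r + m * (k + 1)) k2.
case: k k2 rk HL => [|[|j]] // _ rk HL.
split => hr.
-
  subst r; rewrite (_ : (j.+2 - 2 = j)%N) ?pow2; last lia.
  case: m HL => [|p] HL.
    by apply: (@modP _ _ _ 0); rewrite mul0n mul0r addr0 expr0 mulr1.
  have [q0 h0] := @a_cong' j.+2 p.+1 0 (leq0n _).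
  have [q1 h1] := @a_cong' j.+2 p j.+2 (leqnn _).
  have [q2 h2] := @a_cong' j.+2 p j.+1 (leqnSn _).
  have e1 : ai j.+2 (0 + p.+1 * (j.+2 + 1)) 1 = ai j.+2 (j.+2 + p * (j.+2 + 1)) 0.
    by rewrite (_ : (0 + p.+1 * (j.+2 + 1) = (j.+2 + p * (j.+2 + 1)).+1)%N) //; lia.
  have e2 : ai j.+2 (0 + p.+1 * (j.+2 + 1)) 2 = ai j.+2 (j.+1 + p * (j.+2 + 1)) 0.
    by rewrite (_ : (0 + p.+1 * (j.+2 + 1) = (j.+1 + p * (j.+2 + 1)).+2)%N) //; lia.
  rewrite HL e1 e2 h0 h1 h2.
  apply: (@modP _ _ _ (16 * q0 - 12 * (-1) ^+ p * ('C(j.+2 + p, p))%:Z - 96 * q1 * 2 ^+ j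
     + 2 * (-1) ^+ p * ('C(j.+1 + p, p))%:Z + 16 * q2 * 2 ^+ j)).
  rewrite add0n binn !exprS expr0; ring.
-
  subst r; rewrite (_ : (j.+2 - 1 = j.+1)%N) ?pow2; last lia.
  case: m HL => [|p] HL.
    apply: (@modP _ _ _ 0); rewrite mul0n HL /ai /=; lia.
  have [q0 h0] := @a_cong' j.+2 p.+1 1 (leq_trans (isT : (1 <= 2)%N) (leqnSn _)).
  have [q1 h1] := @a_cong' j.+2 p.+1 0 (leq0n _).
  have [q2 h2] := @a_cong' j.+2 p j.+2 (leqnn _).
  have e1 : ai j.+2 (1 + p.+1 * (j.+2 + 1)) 1 = ai j.+2 (0 + p.+1 * (j.+2 + 1)) 0 by [].
  have e2 : ai j.+2 (1 + p.+1 * (j.+2 + 1)) 2 = ai j.+2 (j.+2 + p * (j.+2 + 1)) 0.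
    by rewrite (_ : (1 + p.+1 * (j.+2 + 1) = (j.+2 + p * (j.+2 + 1)).+2)%N) //; lia.
  rewrite HL e1 e2 h0 h1 h2.
  apply: (@modP _ _ _ (16 * q0 - 12 * q1 + 2 * (-1) ^+ p * ('C(j.+2 + p, p))%:Z + 16 * q2 * 2 ^+ j)).
  rewrite add0n binn add1n binSn !intS !exprS expr0; ring.
-
  subst r; rewrite pow2.
  have [q0 h0] := @a_cong' j.+2 m 2 (isT : (2 <= j.+2)%N).
  have [q1 h1] := @a_cong' j.+2 m 1 (isT : (1 <= j.+2)%N).
  have [q2 h2] := @a_cong' j.+2 m 0 (leq0n _).
  have e1 : ai j.+2 (2 + m * (j.+2 + 1)) 1 = ai j.+2 (1 + m * (j.+2 + 1)) 0 by [].
  have e2 : ai j.+2 (2 + m * (j.+2 + 1)) 2 = ai j.+2 (0 + m * (j.+2 + 1)) 0 by [].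
  have h0' : ai j.+2 (2 + m * (j.+2 + 1)) 0 = (-1) ^+ m * (('C(2 + m, m))%:Z * 2) * 2
     + q0 * 2 ^+ j.+2 * 2 * 2 ^+ 2 by rewrite h0 !exprS expr0; ring.
  have hc : ('C(2 + m, m))%:Z * 2 = (m%:Z + 2) * (m%:Z + 1).
    by have := bin2m m; move/(congr1 Posz); rewrite !PoszM !PoszD.
  rewrite hc in h0'.
  rewrite HL e1 e2 h0' h1 h2.
  apply: (@modP _ _ _ (16 * q0 - 12 * q1 + 2 * q2)).
  rewrite add0n add1n binn binSn intS !exprS expr0; ring.
-
  case: r rk hr HL => [|[|[|s]]] // rk _ HL.
  rewrite (_ : (s.+3 - 2 = s.+1)%N) // (_ : (j.+2 + s.+3 - 2 = j + s.+3)%N); last lia.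
  rewrite !pow2.
  have [q0 h0] := @a_cong' j.+2 m s.+3 rk.
  have [q1 h1] := @a_cong' j.+2 m s.+2 (ltnW rk).
  have [q2 h2] := @a_cong' j.+2 m s.+1 (ltnW (ltnW rk)).
  have e1 : ai j.+2 (s.+3 + m * (j.+2 + 1)) 1 = ai j.+2 (s.+2 + m * (j.+2 + 1)) 0 by [].
  have e2 : ai j.+2 (s.+3 + m * (j.+2 + 1)) 2 = ai j.+2 (s.+1 + m * (j.+2 + 1)) 0 by [].
  rewrite HL e1 e2 h0 h1 h2 -ident.
  apply: (@modP _ _ _ (16 * q0 - 12 * q1 + 2 * q2)).
  rewrite exprD !exprS; ring.
Qed.
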